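(* Let $d\ge 2$. For every unimodular lattice $\mathcal L\subset\mathbb R^d$, every $\vec\alpha\in\mathbb R^d$ and every $N\in\mathbb N$, $$g_N(\vec\alpha,\mathcal L)\le \begin{cases}5 & \text{if } d=2,\\ \sigma_d+1 & \text{if } d\ge 3,\end{cases}$$ where $\sigma_d$ is the kissing number of $\mathbb R^d$.
   Context: A unimodular lattice $\mathcal L\subset\mathbb R^d$ is a lattice of covolume $1$. For $\vec\alpha\in\mathbb R^d$ and $1\le n\le N$, the Kronecker points are $\xi_n=n\vec\alpha+\mathcal L\in\mathbb R^d/\mathcal L$. The nearest neighbour distance of $\xi_n$ is $\delta_{n,N}=\min\{|(m-n)\vec\alpha+\vec\ell|>0 : 1\le m\le N,\ \vec\ell\in\mathcal L\}$, where $|\cdot|$ is the Euclidean norm, and $g_N(\vec\alpha,\mathcal L)=|\{\delta_{n,N}:1\le n\le N\}|$ is the number of distinct nearest neighbour distances. The kissing number $\sigma_d$ is the maximal number of non-overlapping unit balls in $\mathbb R^d$ that can all touch a fixed unit ball. *)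

(* Defs.v *)
From mathcomp Require Import all_boot all_order all_algebra all_classical all_reals.
Set Implicit Arguments. Unset Strict Implicit. Unset Printing Implicit Defensive.
Import Order.TTheory GRing.Theory Num.Theory.
Local Open Scope ring_scope.
Local Open Scope classical_set_scope.

Definition eucl_norm (R : realType) (d : nat) (v : 'rV[R]_d) : R :=
  Num.sqrt (\sum_(i < d) v ord0 i ^+ 2).

Definition lattice_of (R : realType) (d : nat) (B : 'M[R]_d) : set 'rV[R]_d :=
  [set v | exists z : 'I_d -> int, v = \sum_(i < d) (z i)%:~R *: row i B].

Definition unimodular_basis (R : realType) (d : nat) (B : 'M[R]_d) : Prop :=
  `|\det B| = 1.

(* delta_{n,N} = min { |(m-n) alpha + l| > 0 : 1 <= m <= N, l in L }
   (the minimum exists; we write it as the infimum of the set). *)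
Definition nn_dist (R : realType) (d : nat) (L : set 'rV[R]_d)
  (alpha : 'rV[R]_d) (N n : nat) : R :=
  inf [set r : R | exists (m : nat) (l : 'rV[R]_d),
        [/\ (1 <= m <= N)%N, L l,
            r = eucl_norm ((m%:R - n%:R) *: alpha + l) & 0 < r]].

Definition gN (R : realType) (d : nat) (L : set 'rV[R]_d)
  (alpha : 'rV[R]_d) (N : nat) : nat :=
  size (undup [seq nn_dist L alpha N n | n <- iota 1 N]).

(* A kissing configuration of k unit balls around the unit ball at 0:
   centres at distance 2 from 0, pairwise non-overlapping (distance >= 2). *)
Definition kissing_config (R : realType) (d k : nat) : Prop :=
  exists x : 'I_k -> 'rV[R]_d,
    (forall i, eucl_norm (x i) = 2) /\
    (forall i j, i != j -> 2 <= eucl_norm (x i - x j)).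

Definition is_kissing_number (R : realType) (d sigma : nat) : Prop :=
  kissing_config R d sigma /\ (forall k, kissing_config R d k -> (k <= sigma)%N).

(* Main.v *)
Require Import Defs.
From mathcomp Require Import all_boot all_order all_algebra all_classical all_reals.
From mathcomp Require Import ring lra zify.
From mathcomp Require Import trigo.
Set Implicit Arguments. Unset Strict Implicit. Unset Printing Implicit Defensive.
Import Order.TTheory GRing.Theory Num.Theory.
Local Open Scope ring_scope.

Section Vec.
Variable R : realType.
Variable d : nat.
Implicit Types u v w : 'rV[R]_d.

Definition dot u v : R := \sum_(i < d) u ord0 i * v ord0 i.

Lemma dotC u v : dot u v = dot v u.
Proof. by apply: eq_bigr => i _; rewrite mulrC. Qed.

Lemma dotDl u v w : dot (u + v) w = dot u w + dot v w.
Proof. by rewrite /dot -big_split; apply: eq_bigr => i _; rewrite !mxE mulrDl. Qed.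

Lemma dotNl u w : dot (- u) w = - dot u w.
Proof. by rewrite /dot -sumrN; apply: eq_bigr => i _; rewrite !mxE mulNr. Qed.

Lemma dotBl u v w : dot (u - v) w = dot u w - dot v w.
Proof. by rewrite dotDl dotNl. Qed.

Lemma dotZl (a : R) u w : dot (a *: u) w = a * dot u w.
Proof. by rewrite /dot mulr_sumr; apply: eq_bigr => i _; rewrite !mxE mulrA. Qed.

Lemma dotDr u v w : dot w (u + v) = dot w u + dot w v.
Proof. by rewrite dotC dotDl !(dotC w). Qed.
Lemma dotNr u w : dot w (- u) = - dot w u.
Proof. by rewrite dotC dotNl dotC. Qed.
Lemma dotBr u v w : dot w (u - v) = dot w u - dot w v.
Proof. by rewrite dotDr dotNr. Qed.
Lemma dotZr (a : R) u w : dot w (a *: u) = a * dot w u.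
Proof. by rewrite dotC dotZl dotC. Qed.

Lemma dot_ge0 u : 0 <= dot u u.
Proof. by apply: sumr_ge0 => i _; rewrite -expr2 sqr_ge0. Qed.

Lemma normE u : eucl_norm u = Num.sqrt (dot u u).
Proof. by rewrite /eucl_norm /dot; congr Num.sqrt; apply: eq_bigr => i _; rewrite expr2. Qed.

Lemma norm_ge0 u : 0 <= eucl_norm u.
Proof. by rewrite normE sqrtr_ge0. Qed.

Lemma norm_sq u : eucl_norm u ^+ 2 = dot u u.
Proof. by rewrite normE sqr_sqrtr // dot_ge0. Qed.

Lemma normN u : eucl_norm (- u) = eucl_norm u.
Proof. by rewrite !normE dotNl dotNr opprK. Qed.

Lemma normZ (a : R) u : eucl_norm (a *: u) = `|a| * eucl_norm u.
Proof. by rewrite !normE dotZl dotZr mulrA sqrtrM ?sqrtr_sqr // -expr2 sqr_ge0. Qed.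

Lemma dot0_eq0 u : dot u u = 0 -> u = 0.
Proof.
move=> h; apply/rowP => i; rewrite mxE.
have : \sum_(j < d) u ord0 j * u ord0 j == 0 by apply/eqP.
rewrite psumr_eq0; last by move=> j _; rewrite -expr2 sqr_ge0.
move/allP/(_ i (mem_index_enum _)) => /implyP /(_ isT) /eqP.
by move/eqP; rewrite mulf_eq0 orbb => /eqP.
Qed.

Lemma norm_eq0 u : eucl_norm u = 0 -> u = 0.
Proof.
move=> h; apply: dot0_eq0; rewrite -norm_sq h; by rewrite expr0n.
Qed.

Lemma norm_lt u v : eucl_norm u < eucl_norm v -> dot u u < dot v v.
Proof. by move=> h; rewrite -!norm_sq ltr_pXn2r // ?nnegrE ?norm_ge0. Qed.

Lemma norm_le u v : eucl_norm u <= eucl_norm v -> dot u u <= dot v v.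
Proof. by move=> h; rewrite -!norm_sq ler_pXn2r // ?nnegrE ?norm_ge0. Qed.

Lemma norm_ltP u v : (eucl_norm u < eucl_norm v) = (dot u u < dot v v).
Proof. by rewrite -!norm_sq ltr_pXn2r // ?nnegrE ?norm_ge0. Qed.

Lemma norm_leP u v : (eucl_norm u <= eucl_norm v) = (dot u u <= dot v v).
Proof. by rewrite -!norm_sq ler_pXn2r // ?nnegrE ?norm_ge0. Qed.

End Vec.

Section Coord.
Variable R : realType.

Lemma coord_lemma (A B rho x y : R) : 0 < A -> 0 < B -> 0 < rho ->
  2 * x < rho -> 2 * y < rho -> 0 < x * B + y * A ->
  rho ^+ 2 < A ^+ 2 + x ^+ 2 -> rho ^+ 2 < B ^+ 2 + y ^+ 2 ->
  A ^+ 2 + x ^+ 2 <= (A - B) ^+ 2 + (rho - x - y) ^+ 2 ->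
  B ^+ 2 + y ^+ 2 <= (A - B) ^+ 2 + (rho - x - y) ^+ 2 -> False.
Proof.
move=> A0 B0 r0 hx hy hc ha hb za zb.
have h1 : (rho - y) ^+ 2 < B ^+ 2 - 2 * y * (rho - y) by nra.
have h2 : (rho - x) ^+ 2 < A ^+ 2 - 2 * x * (rho - x) by nra.
have e1 : (A - B) ^+ 2 + (rho - x - y) ^+ 2 - (A ^+ 2 + x ^+ 2)
   = B ^+ 2 - 2 * A * B + (rho - y) ^+ 2 - 2 * x * (rho - y) by ring.
have e2 : (A - B) ^+ 2 + (rho - x - y) ^+ 2 - (B ^+ 2 + y ^+ 2)
   = A ^+ 2 - 2 * A * B + (rho - x) ^+ 2 - 2 * y * (rho - x) by ring.
have z1 : 0 <= B ^+ 2 - 2 * A * B + (rho - y) ^+ 2 - 2 * x * (rho - y) by lra.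
have z2 : 0 <= A ^+ 2 - 2 * A * B + (rho - x) ^+ 2 - 2 * y * (rho - x) by lra.
have f1 : 0 < 2 * B * (B - A) - 2 * (x + y) * (rho - y) by lra.
have f2 : 0 < 2 * A * (A - B) - 2 * (x + y) * (rho - x) by lra.
case: (lerP 0 (x + y)) => sxy.
  have : 0 < A * (2 * B * (B - A) - 2 * (x + y) * (rho - y))
           + B * (2 * A * (A - B) - 2 * (x + y) * (rho - x)).
    by apply: addr_gt0; apply: mulr_gt0.
  have -> : A * (2 * B * (B - A) - 2 * (x + y) * (rho - y))
           + B * (2 * A * (A - B) - 2 * (x + y) * (rho - x))
          = - (2 * (x + y) * (A * (rho - y) + B * (rho - x))) by ring.
  have P : 0 <= 2 * (x + y) * (A * (rho - y) + B * (rho - x)).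
    apply: mulr_ge0; first lra.
    apply: addr_ge0; apply: mulr_ge0; lra.
  lra.
case: (lerP 0 x) => sx.
  have sy : y < 0 by lra.
  have hAB : x * (B - A) > - (x + y) * A by nra.
  have xpos : 0 < x by nra.
  have BA : 0 < B - A by nra.
  have q1 : x * (rho - x) <= A ^+ 2 by nra.
  have : A * (2 * A * (A - B) - 2 * (x + y) * (rho - x)) < 0.
    have : - (x + y) * A * (rho - x) < x * (B - A) * (rho - x).
      by rewrite ltr_pM2r; lra.
    nra.
  nra.
have sx' : x < 0 by lra.
have sy : 0 < y by nra.
have hAB : y * (A - B) > - (x + y) * B by nra.
have AB : 0 < A - B by nra.
have q1 : y * (rho - y) <= B ^+ 2 by nra.
have : B * (2 * B * (B - A) - 2 * (x + y) * (rho - y)) < 0.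
  have : - (x + y) * B * (rho - y) < y * (A - B) * (rho - y).
    by rewrite ltr_pM2r; lra.
  nra.
nra.
Qed.

End Coord.

Section Trig.
Variable R : realType.

Lemma cos_pi3 : cos (pi / 3) = 1 / 2 :> R.
Proof.
set x := pi / 3 : R.
have pix : pi = x + x + x by rewrite /x; field.
have c3 : cos (x + x + x) = - 1 by rewrite -pix cospi.
rewrite cosD cosD sinD in c3.
have s2 := sin2cos2 x.
have cpos : 0 < cos x.
  have p0 := pi_gt0 R; apply: cos_gt0_pihalf; rewrite /x; apply/andP; split; lra.
set c := cos x in c3 s2 cpos *.
set s := sin x in c3 s2 *.
have e : (c + 1) * (2 * c - 1) ^+ 2 = 0.
  have -> : (c + 1) * (2 * c - 1) ^+ 2 = 4 * c ^+ 3 - 3 * c + 1 by ring.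
  have -> : c ^+ 3 = c * c * c by ring.
  have e3 : (c * c - s * s) * c - (s * c + c * s) * s = c ^+ 3 - 3 * (s ^+ 2) * c by ring.
  rewrite e3 s2 in c3.
  apply: (@eq_trans _ _ (c ^+ 3 - 3 * (1 - c ^+ 2) * c + 1)); first ring.
  by rewrite c3 addNr.
move/eqP: e; rewrite mulf_eq0 => /orP [/eqP|]; first lra.
rewrite expf_eq0 /= => /eqP; lra.
Qed.

Lemma cos_lt_half (t : R) : - (pi *+ 2) < t < pi *+ 2 -> cos t < 1 / 2 ->
  pi / 3 < `|t| /\ `|t| < pi * 5 / 3.
Proof.
move=> /andP [t1 t2]; rewrite -cos_norm.
have pi0 := pi_gt0 R.
have : `|t| < pi *+ 2 by rewrite ltr_norml t1 t2.
have : 0 <= `|t| by [].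
set u := `|t|; move=> u0 u2 hc.
have cp3 : cos (pi / 3) = 1 / 2 :> R by exact: cos_pi3.
have p3in : (pi / 3 : R) \in `[0, pi] by rewrite in_itv /=; apply/andP; split; lra.
case: (lerP u pi) => hu.
  have uin : u \in `[0, pi] by rewrite in_itv /=; apply/andP; split.
  have := hc; rewrite -cp3 (ltr_cos p3in uin) => h; split => //; lra.
have e : cos u = cos (pi *+ 2 - u).
  by rewrite -opprB cosN -(cosD2pi (u - pi *+ 2)) subrK.
have vin : pi *+ 2 - u \in `[0, pi] by rewrite in_itv /=; apply/andP; split; lra.
move: hc; rewrite e -cp3 (ltr_cos p3in vin) => h; split; lra.
Qed.

Lemma polar (c s : R) : c ^+ 2 + s ^+ 2 = 1 ->
  exists p, [/\ 0 <= p < pi *+ 2, cos p = c & sin p = s].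
Proof.
move=> h.
have pi0 := pi_gt0 R.
have s2 := sqr_ge0 s.
have c1 : -1 <= c <= 1 by apply/andP; split; nra.
have cin : c \in `[(-1), 1] by rewrite in_itv /=.
have sa : sin (acos c) = `|s|.
  rewrite sin_acos // -sqrtr_sqr; congr Num.sqrt; lra.
have a0 := acos_ge0 c1.
have api := acos_lepi c1.
case: (lerP 0 s) => hs.
  exists (acos c); split; first (apply/andP; split; lra).
    by rewrite acosK.
  by rewrite sa ger0_norm.
have c1' : -1 <= c < 1.
  apply/andP; split; first by case/andP: c1.
  have : 0 < s ^+ 2 by rewrite exprn_even_gt0 //= lt_eqF.
  nra.
have ag := acos_gt0 c1'.
exists (pi *+ 2 - acos c); split; first (apply/andP; split; lra).
  by rewrite -opprB cosN -(cosD2pi (acos c - pi *+ 2)) subrK acosK.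
rewrite addrC sinD2pi sinN sa ltr0_norm //; by rewrite opprK.
Qed.

Lemma sin_neg_pi2 (t : R) : pi < t < pi *+ 2 -> sin t < 0.
Proof.
move=> /andP [t1 t2].
have -> : t = (t - pi) + pi by rewrite subrK.
rewrite sinDpi oppr_lt0; apply: sin_gt0_pi; apply/andP; split; lra.
Qed.

Lemma sort4 (f : 'I_4 -> R) (del : R) :
  (forall i j, i != j -> del < `|f i - f j|) ->
  exists i j, del *+ 3 < f j - f i.
Proof.
move=> h.
have h01 := h 0 1 isT; have h02 := h 0 2 isT; have h03 := h 0 3 isT.
have h12 := h 1 2 isT; have h13 := h 1 3 isT; have h23 := h 2 3 isT.
move: h01 h02 h03 h12 h13 h23.
set a := f 0; set b := f 1; set c := f 2; set e := f 3.
rewrite !ltr_normr.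
move=> /orP [?|?] /orP [?|?] /orP [?|?] /orP [?|?] /orP [?|?] /orP [?|?];
first [ by exists 0, 1; rewrite -/a -/b; lra
      | by exists 0, 2; rewrite -/a -/c; lra
      | by exists 0, 3; rewrite -/a -/e; lra
      | by exists 1, 0; rewrite -/a -/b; lra
      | by exists 1, 2; rewrite -/c -/b; lra
      | by exists 1, 3; rewrite -/e -/b; lra
      | by exists 2, 0; rewrite -/a -/c; lra
      | by exists 2, 1; rewrite -/b -/c; lra
      | by exists 2, 3; rewrite -/e -/c; lra
      | by exists 3, 0; rewrite -/a -/e; lra
      | by exists 3, 1; rewrite -/b -/e; lra
      | by exists 3, 2; rewrite -/c -/e; lra ].
Qed.

End Trig.

Section Geo.
Variable R : realType.

Lemma dot2 (u v : 'rV[R]_2) : dot u v = u 0 0 * v 0 0 + u 0 1 * v 0 1.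
Proof. rewrite /dot big_ord_recr big_ord_recr big_ord0 /= add0r.
have e0 : widen_ord (leqnSn 1) ord_max = (0 : 'I_2) by apply/val_inj.
have e1 : ord_max = (1 : 'I_2) by apply/val_inj.
have e2 : ord0 = (0 : 'I_1) by apply/val_inj.
by rewrite e0 e1 e2.
Qed.

Lemma geo2 (m : 'rV[R]_2) (w : 'I_4 -> 'rV[R]_2) :
  0 < eucl_norm m ->
  (forall i, eucl_norm m < eucl_norm (w i)) ->
  (forall i, 2 * dot (w i) m < dot m m) ->
  (forall i j, i != j -> 2 * dot (w i) (w j) < eucl_norm (w i) * eucl_norm (w j)) ->
  (forall i j, i != j -> dot (w i) (w i) < dot (w i + w j - m) (w i + w j - m)) -> False.
Proof.
move=> m0 hmw hX hww hC.
set nm := eucl_norm m.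
pose X i := dot (w i) m.
pose S i := m 0 0 * w i 0 1 - m 0 1 * w i 0 0.
have nw0 i : 0 < eucl_norm (w i) by apply: lt_trans (hmw i).
have lag i : X i ^+ 2 + S i ^+ 2 = dot (w i) (w i) * dot m m.
  by rewrite /X /S !dot2; ring.
have crs i j : dot (w i) (w j) * dot m m = X i * X j + S i * S j.
  by rewrite /X /S !dot2; ring.
have nm0 : nm != 0 by rewrite gt_eqF.
have nwn i : eucl_norm (w i) != 0 by rewrite gt_eqF.
have nmsq : dot m m = nm ^+ 2 by rewrite norm_sq.
have nwsq i : dot (w i) (w i) = eucl_norm (w i) ^+ 2 by rewrite norm_sq.
pose c i := X i / (eucl_norm (w i) * nm).
pose s i := S i / (eucl_norm (w i) * nm).
have pos i : 0 < eucl_norm (w i) * nm by apply: mulr_gt0.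
have cs1 i : c i ^+ 2 + s i ^+ 2 = 1.
  rewrite /c /s !expr_div_n -mulrDl lag nmsq nwsq -exprMn divff //.
  by rewrite expf_neq0 // gt_eqF.
have [phi hphi] := choice (fun i => polar (cs1 i)).
have hc i : cos (phi i) < 1 / 2.
  have [_ -> _] := hphi i.
  rewrite /c ltr_pdivrMr // .
  have := hX i; rewrite -/(X i) nmsq => h.
  have : nm * nm < eucl_norm (w i) * nm by rewrite ltr_pM2r // hmw.
  rewrite -expr2; lra.
have hcc i j : i != j -> cos (phi i - phi j) < 1 / 2.
  move=> ij; have [_ ci si] := hphi i; have [_ cj sj] := hphi j.
  rewrite cosB ci si cj sj /c /s.
  have -> : X i / (eucl_norm (w i) * nm) * (X j / (eucl_norm (w j) * nm)) +
    S i / (eucl_norm (w i) * nm) * (S j / (eucl_norm (w j) * nm))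
    = (X i * X j + S i * S j) / ((eucl_norm (w i) * nm) * (eucl_norm (w j) * nm)).
    by field; rewrite ?nm0 ?nwn.
  rewrite -crs nmsq.
  have -> : dot (w i) (w j) * nm ^+ 2 / (eucl_norm (w i) * nm * (eucl_norm (w j) * nm))
     = dot (w i) (w j) / (eucl_norm (w i) * eucl_norm (w j)).
    by field; rewrite ?nm0 ?nwn.
  rewrite ltr_pdivrMr; last by apply: mulr_gt0.
  have := hww i j ij; lra.
have pi0 := pi_gt0 R.
have rng i : pi / 3 < phi i < pi * 5 / 3.
  have [/andP [p0 p2] _ _] := hphi i.
  have [h1 h2] := cos_lt_half (t := phi i) (ltac:(apply/andP; split; lra)) (hc i).
  by rewrite ger0_norm // in h1 h2; apply/andP; split.
have sep i j : i != j -> pi / 3 < `|phi i - phi j|.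
  move=> ij; have /andP [a1 a2] := rng i; have /andP [b1 b2] := rng j.
  have [h1 _] := cos_lt_half (t := phi i - phi j) (ltac:(apply/andP; split; lra)) (hcc i j ij).
  exact: h1.
have [a [b hab]] := sort4 sep.
have /andP [a1 a2] := rng a; have /andP [b1 b2] := rng b.
have ab : a != b by apply/eqP => e; move: hab; rewrite e subrr; lra.
have [_ ca sa] := hphi a; have [_ cb sb] := hphi b.
have hsa : 0 < sin (phi a) by apply: sin_gt0_pi; apply/andP; split; lra.
have hsb : sin (phi b) < 0 by apply: sin_neg_pi2; apply/andP; split; lra.
have sinBA : sin (phi b - phi a) < 0 by apply: sin_neg_pi2; apply/andP; split; lra.
rewrite sinB cb sb ca sa in sinBA.
rewrite sa in hsa; rewrite sb in hsb.
have SA : 0 < S a by move: hsa; rewrite /s pmulr_lgt0 // invr_gt0.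
have SB : S b < 0 by move: hsb; rewrite /s pmulr_llt0 // invr_gt0.
have cone : 0 < X a * (- S b) + X b * S a.
  move: sinBA; rewrite /s /c.
  have -> : S b / (eucl_norm (w b) * nm) * (X a / (eucl_norm (w a) * nm)) -
   X b / (eucl_norm (w b) * nm) * (S a / (eucl_norm (w a) * nm))
   = - (X a * (- S b) + X b * S a) / ((eucl_norm (w b) * nm) * (eucl_norm (w a) * nm)).
    by field; rewrite ?nm0 ?nwn.
  rewrite pmulr_llt0; last by rewrite invr_gt0 mulr_gt0.
  by rewrite oppr_lt0.
have rho0 : 0 < dot m m by rewrite nmsq exprn_gt0.
have ra i : dot m m ^+ 2 < S i ^+ 2 + X i ^+ 2.
  rewrite addrC lag expr2 ltr_pM2r //.
  by move: (hmw i); rewrite norm_ltP.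
have zid i j : dot m m * dot (w i + w j - m) (w i + w j - m)
   = (S i + S j) ^+ 2 + (dot m m - X i - X j) ^+ 2.
  by rewrite /X /S !dot2 !mxE; ring.
apply: (@coord_lemma R (S a) (- S b) (dot m m) (X a) (X b)).
- exact: SA.
- by rewrite oppr_gt0.
- exact: rho0.
- exact: hX.
- exact: hX.
- exact: cone.
- exact: ra.
- by rewrite sqrrN; exact: ra.
- rewrite opprK -zid addrC lag [_ * dot m m]mulrC ler_pM2l //.
  by apply: ltW; apply: hC.
- rewrite sqrrN opprK -zid addrC lag [_ * dot m m]mulrC ler_pM2l //.
  have -> : w a + w b - m = w b + w a - m by rewrite (addrC (w a)).
  by apply: ltW; apply: hC; rewrite eq_sym.
Qed.

End Geo.

Local Open Scope classical_set_scope.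

Section Lat.
Variable R : realType.
Variable d : nat.
Variable B : 'M[R]_d.
Variable alpha : 'rV[R]_d.
Variable N : nat.
Local Notation L := (lattice_of B).
Hypothesis Lnz : exists l, L l /\ l != 0.

Lemma L0 : L 0.
Proof. by exists (fun=> 0); rewrite big1 // => i _; rewrite scale0r. Qed.

Lemma LN l : L l -> L (- l).
Proof.
case=> z ->; exists (fun i => - z i); rewrite -sumrN; apply: eq_bigr => i _.
by rewrite intrN scaleNr.
Qed.

Lemma LD l l' : L l -> L l' -> L (l + l').
Proof.
case=> z -> [z' ->]; exists (fun i => z i + z' i); rewrite -big_split.
by apply: eq_bigr => i _; rewrite intrD scalerDl.
Qed.

Lemma LB l l' : L l -> L l' -> L (l - l').
Proof. by move=> h h'; apply: LD => //; apply: LN. Qed.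

Definition Tset (t : nat) : set R :=
  [set r | exists (j : nat) (l : 'rV[R]_d),
     [/\ (j <= t)%N, L l, r = eucl_norm (j%:R *: alpha + l) & 0 < r]].

Definition g t := inf (Tset t).

Lemma Tne t : Tset t !=set0.
Proof.
case: Lnz => l [Ll l0]; exists (eucl_norm l), 0%N, l; split => //.
  by rewrite scale0r add0r.
rewrite lt_neqAle norm_ge0 andbT eq_sym; apply/eqP => /norm_eq0 h.
by move: l0; rewrite h eqxx.
Qed.

Lemma Tlb t : has_lbound (Tset t).
Proof. by exists 0 => r [j [l [_ _ -> h]]]; apply: ltW. Qed.

Lemma Tmono s t : (s <= t)%N -> Tset s `<=` Tset t.
Proof. by move=> st r [j [l [js Ll e h]]]; exists j, l; split => //; apply: leq_trans st. Qed.

Lemma g_lb t r : Tset t r -> g t <= r.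
Proof. by move=> h; apply: ge_inf (Tlb t) _ h. Qed.

Lemma g_le s t : (s <= t)%N -> g t <= g s.
Proof.
move=> st; apply: lb_le_inf (Tne s) _ => r hr.
by apply: g_lb; apply: Tmono hr.
Qed.

Lemma g_lt t y : g t < y -> exists2 r, Tset t r & r < y.
Proof. exact: inf_lt (Tne t). Qed.

Lemma comb_sub (a b : R) l l' :
  (a *: alpha + l) - (b *: alpha + l') = (a - b) *: alpha + (l - l').
Proof. by rewrite scalerBl opprD addrACA. Qed.

Lemma comb_add (a b : R) l l' :
  (a *: alpha + l) + (b *: alpha + l') = (a + b) *: alpha + (l + l').
Proof. by rewrite scalerDl addrACA. Qed.

Lemma Tmem (z : int) l t : (`|z| <= t)%N -> L l ->
  0 < eucl_norm (z%:~R *: alpha + l) -> Tset t (eucl_norm (z%:~R *: alpha + l)).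
Proof.
case: z => n /= hn Ll hp.
  by exists n, l; split.
exists n.+1, (- l); split => //; first exact: LN.
by rewrite -normN opprD NegzE intrN scaleNr opprK.
Qed.

Lemma nn_eq n : (1 <= n <= N)%N -> nn_dist L alpha N n = g (maxn n.-1 (N - n)).
Proof.
move=> /andP [n1 nN]; rewrite /nn_dist /g; congr inf.
apply/seteqP; split => r.
  case=> m [l [/andP [m1 mN] Ll -> rp]].
  have -> : (m%:R - n%:R : R) = (m%:Z - n%:Z)%:~R by rewrite intrB.
  apply: Tmem => //; first lia.
  by move: rp; rewrite intrB.
case=> j [l [jt Ll -> rp]].
case: (leqP j (N - n)) => hj.
  exists (n + j)%N, l; split => //; first (apply/andP; split; lia).
  by rewrite natrD addrAC subrr add0r.
have jn : (j <= n.-1)%N by lia.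
have e : ((n - j)%:R - n%:R) *: alpha + - l = - (j%:R *: alpha + l).
  rewrite natrB; last lia.
  have -> : (n%:R - j%:R - n%:R : R) = - j%:R by ring.
  by rewrite scaleNr opprD.
exists (n - j)%N, (- l); split.
- apply/andP; split; lia.
- exact: LN.
- by rewrite e normN.
- by [].
Qed.


Definition t0 := (N %/ 2)%N.

Lemma rec_exists x : (exists t, [/\ (t0 <= t)%N, (t <= N.-1)%N & x = g t]) -> x != g t0 ->
  exists k, [/\ (t0 < k)%N, (k <= N.-1)%N, g k = x & g k < g k.-1].
Proof.
move=> [t [t1 t2 ->]] neq.
have ex : exists t', ((t0 <= t')%N && (g t' == g t)) by exists t; rewrite t1 eqxx.
case: (ex_minnP ex) => k /andP [k1 /eqP gk] kmin.
have kt : (k <= t)%N by apply: kmin; rewrite t1 eqxx.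
have kt0 : k != t0 by apply/eqP => e; move: neq; rewrite -gk e eqxx.
exists k; split => //; first by rewrite ltn_neqAle eq_sym kt0.
- by apply: leq_trans t2.
have hk : (t0 <= k.-1)%N by lia.
have ne : g k.-1 != g t.
  apply/negP => e; have := kmin k.-1; rewrite hk e => /(_ isT); lia.
by rewrite lt_neqAle g_le ?leq_pred // andbT gk eq_sym.
Qed.

Lemma rec_vec k : (0 < k)%N -> g k < g k.-1 ->
  exists l, [/\ L l, 0 < eucl_norm (k%:R *: alpha + l) & eucl_norm (k%:R *: alpha + l) < g k.-1].
Proof.
move=> k0 /g_lt [r [j [l [jk Ll -> rp]]] rlt].
case: (ltnP j k) => hj.
  have : g k.-1 <= eucl_norm (j%:R *: alpha + l).
    by apply: g_lb; exists j, l; split => //; lia.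
  lra.
have e : j = k by apply/eqP; rewrite eqn_leq jk hj.
rewrite e in rlt rp; by exists l; split.
Qed.


Lemma records : exists r (K : 'I_r -> nat) (V : 'I_r -> 'rV[R]_d) (c : R),
  [/\ (gN L alpha N <= r.+1)%N,
      forall i j, i != j -> K i != K j,
      forall i, 0 < eucl_norm (V i) < c,
      forall i j, (K i < K j)%N -> c <= eucl_norm (V j - V i) /\ eucl_norm (V j) < eucl_norm (V i)
    & forall i j k, (K i < K j)%N -> eucl_norm (V k) < eucl_norm (V k - V j + V i)].
Proof.
set f := nn_dist L alpha N.
set vals := undup (map f (iota 1 N)).
set Rs := [seq x <- vals | x != g t0].
have hsize : (gN L alpha N <= (size Rs).+1)%N.
  rewrite /gN -/f -/vals.
  have : (size vals <= size (g t0 :: Rs))%N.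
    apply: uniq_leq_size; first exact: undup_uniq.
    by move=> x xv; rewrite in_cons mem_filter xv andbT; case: eqP.
  by [].
have inR x : x \in Rs -> exists k, [/\ (t0 < k)%N, (k <= N.-1)%N, g k = x & g k < g k.-1].
  rewrite mem_filter => /andP [ne xv]; apply: rec_exists ne.
  rewrite mem_undup in xv; case/mapP: xv => n nin ->.
  rewrite mem_iota in nin.
  exists (maxn n.-1 (N - n)); split; rewrite /t0; try lia.
  rewrite /f nn_eq //; lia.
have goodP : forall x, exists p : nat * 'rV[R]_d, x \in Rs ->
    [/\ (t0 < p.1)%N, (p.1 <= N.-1)%N, g p.1 = x, g p.1 < g p.1.-1 &
     [/\ L p.2, 0 < eucl_norm (p.1%:R *: alpha + p.2) &
       eucl_norm (p.1%:R *: alpha + p.2) < g p.1.-1]].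
  move=> x; case xin: (x \in Rs); last by exists (0%N, 0).
  have [k [k1 k2 gk gl]] := inR x xin.
  have k0 : (0 < k)%N by lia.
  have [l [Ll p1 p2]] := rec_vec k0 gl.
  by exists (k, l).
have [F hF] := choice goodP.
pose x (i : 'I_(size Rs)) := nth 0 Rs i.
have xin i : x i \in Rs by apply: mem_nth.
pose K i := (F (x i)).1.
pose l i := (F (x i)).2.
pose V i := (K i)%:R *: alpha + l i.
have hFi i := hF (x i) (xin i).
have uR : uniq Rs by apply: filter_uniq; apply: undup_uniq.
have hNt : (N <= t0.*2 + 2)%N by rewrite /t0; lia.
have Vmem i : Tset (K i) (eucl_norm (V i)).
  by have [_ _ _ _ [Ll p1 p2]] := hFi i; exists (K i), (l i); split.
have Vlt i : eucl_norm (V i) < g (K i).-1.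
  by have [_ _ _ _ [Ll p1 p2]] := hFi i.
have Vpos i : 0 < eucl_norm (V i).
  by have [_ _ _ _ [Ll p1 p2]] := hFi i.
have Lli i : L (l i) by have [_ _ _ _ [Ll p1 p2]] := hFi i.
have Kr i : (t0 < K i)%N /\ (K i <= N.-1)%N by have [? ? _ _ _] := hFi i.
have gK i : g (K i) = x i by have [_ _ ? _ _] := hFi i.
have Vc i : eucl_norm (V i) < g t0.
  apply: (lt_le_trans (Vlt i)); apply: g_le; have := Kr i; lia.
have Q2 i j : (K i < K j)%N -> g t0 <= eucl_norm (V j - V i).
  move=> ij.
  have [/norm_eq0 e|np] := eqVneq (eucl_norm (V j - V i)) 0.
    have e' : V j = V i by apply/eqP; rewrite -subr_eq0 e.
    have h1 := g_lb (Vmem i).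
    have h2 : g (K j).-1 <= g (K i) by apply: g_le; lia.
    have := Vlt j; rewrite e'; lra.
  have np' : 0 < eucl_norm (V j - V i) by rewrite lt_neqAle eq_sym np norm_ge0.
  apply: g_lb; move: np'; rewrite /V comb_sub.
  have -> : ((K j)%:R - (K i)%:R : R) = ((K j)%:Z - (K i)%:Z)%:~R by rewrite intrB.
  move=> np'; apply: Tmem => //; last by apply: LB.
  have := Kr i; have := Kr j; lia.
exists (size Rs), K, V, (g t0); split => //.
- move=> i j ij; apply/negP => /eqP e.
  have : x i = x j by rewrite -gK e gK.
  rewrite /x => /eqP; rewrite nth_uniq // => /eqP /val_inj e2.
  by move: ij; rewrite e2 eqxx.
- by move=> i; rewrite Vpos Vc.
- move=> i j ij; split; first exact: Q2.
  apply: (lt_le_trans (Vlt j)).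
  apply: (le_trans _ (g_lb (Vmem i))); apply: g_le; lia.
move=> i j k ij.
have [e|np] := eqVneq (eucl_norm (V k - V j + V i)) 0.
  have e' : V k = V j - V i.
    by apply/eqP; rewrite -subr_eq0 opprB addrA addrAC; apply/eqP; apply: norm_eq0.
  have := Q2 i j ij; have := Vc k; rewrite e'; lra.
have np' : 0 < eucl_norm (V k - V j + V i) by rewrite lt_neqAle eq_sym np norm_ge0.
apply: (lt_le_trans (Vlt k)); apply: g_lb.
move: np'; rewrite /V comb_sub comb_add.
have -> : ((K k)%:R - (K j)%:R + (K i)%:R : R) = ((K k)%:Z - (K j)%:Z + (K i)%:Z)%:~R.
  by rewrite intrD intrB.
move=> np'; apply: Tmem => //; last by apply: LD => //; apply: LB.
have := Kr i; have := Kr j; have := Kr k; lia.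
Qed.

End Lat.

Local Close Scope classical_set_scope.

Section Main.
Variable R : realType.

Lemma pair_facts d (u v : 'rV[R]_d) (c : R) :
  0 < eucl_norm u -> 0 < eucl_norm v -> eucl_norm u < c -> eucl_norm v < c ->
  c <= eucl_norm (v - u) ->
  [/\ 2 * dot u v < dot u u, 2 * dot u v < dot v v &
      2 * dot u v < eucl_norm u * eucl_norm v].
Proof.
move=> u0 v0 uc vc cvu.
have e : dot (v - u) (v - u) = dot v v - 2 * dot u v + dot u u.
  by rewrite !dotBl !dotBr (dotC v u); ring.
have n0 : 0 <= eucl_norm (v - u) := norm_ge0 _.
have h1 : eucl_norm u ^+ 2 < eucl_norm (v - u) ^+ 2.
  by rewrite ltr_pXn2r // ?nnegrE ?norm_ge0 //; apply: lt_le_trans cvu.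
have h2 : eucl_norm v ^+ 2 < eucl_norm (v - u) ^+ 2.
  by rewrite ltr_pXn2r // ?nnegrE ?norm_ge0 //; apply: lt_le_trans cvu.
rewrite !norm_sq e in h1 h2.
have a1 : 2 * dot u v < dot u u by lra.
have a2 : 2 * dot u v < dot v v by lra.
split => //.
rewrite -!norm_sq in a1 a2.
case: (lerP (eucl_norm u) (eucl_norm v)) => h.
  apply: (lt_le_trans a1); rewrite expr2 ler_pM2l //.
apply: (lt_le_trans a2); rewrite expr2 ler_pM2r //; exact: ltW.
Qed.

Lemma lattice_nz d (B : 'M[R]_d) : (0 < d)%N -> unimodular_basis B ->
  exists l, lattice_of B l /\ l != 0.
Proof.
case: d B => // d B _ hB.
apply: contrapT => hn.
have hr i : row i B = 0.
  apply/eqP; apply: contrapT => hi; apply: hn; exists (row i B); split; last by apply/negP.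
  exists (fun j => (j == i)%:Z).
  rewrite (bigD1 i) //= eqxx scale1r big1 ?addr0 // => j /negbTE ->.
  by rewrite scale0r.
have B0 : B = 0.
  apply/matrixP => i j; have := congr1 (fun M : 'rV_d.+1 => M 0 j) (hr i).
  by rewrite !mxE.
by move: hB; rewrite /unimodular_basis B0 det0 normr0 => /eqP; rewrite eq_sym oner_eq0.
Qed.

End Main.

Theorem theorem1p1 (R : realType) (d : nat) (hd : (2 <= d)%N)
  (B : 'M[R]_d) (hB : unimodular_basis B) (alpha : 'rV[R]_d) (N : nat) :
  (d = 2%N -> (gN (lattice_of B) alpha N <= 5)%N) /\
  ((3 <= d)%N -> forall sigma : nat, is_kissing_number R d sigma ->
     (gN (lattice_of B) alpha N <= sigma.+1)%N).
Proof.
have d0 : (0 < d)%N by lia.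
have Lnz := lattice_nz d0 hB.
have [r [K [V [c [hN hK hV hQ hC]]]]] := @records R d B alpha N Lnz.
have pf i j : i != j -> 2 * dot (V i) (V j) < eucl_norm (V i) * eucl_norm (V j).
  move=> ij; have /andP [p1 q1] := hV i; have /andP [p2 q2] := hV j.
  have hk := hK _ _ ij.
  case: (ltngtP (K i) (K j)) => [lt|gt|eq]; last by rewrite eq eqxx in hk.
    have [h _] := hQ _ _ lt.
    by have [_ _ ->] := pair_facts p1 p2 q1 q2 h.
  have [h _] := hQ _ _ gt.
  have [_ _ h'] := pair_facts p2 p1 q2 q1 h.
  by rewrite dotC [X in _ < X]mulrC.
split.
- move=> d2; subst d.
  suff r4 : (r <= 4)%N by lia.
  rewrite leqNgt; apply/negP => r5.
  have r0 : (0 < r)%N by lia.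
  pose i0 := Ordinal r0.
  case: (@arg_maxnP _ i0 predT K isT) => m _ mmax.
  have h4 : (4 <= r.-1)%N by lia.
  pose idx (k : 'I_4) : 'I_r := lift m (widen_ord h4 k).
  have idx_ne k : idx k != m by rewrite eq_sym neq_lift.
  have idx_inj : injective idx.
    by move=> a b /lift_inj /(congr1 val) /= e; apply: val_inj.
  have Klt k : (K (idx k) < K m)%N.
    have := mmax (idx k) isT; have := hK _ _ (idx_ne k); lia.
  apply: (@geo2 R (V m) (fun k => V (idx k))).
  + by case/andP: (hV m).
  + by move=> k; have [_ ->] := hQ _ _ (Klt k).
  + move=> k; have [a1 a2] := hQ _ _ (Klt k).
    have /andP [p1 q1] := hV (idx k); have /andP [p2 q2] := hV m.
    by have [_ -> _] := pair_facts p1 p2 q1 q2 a1.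
  + move=> a b ab; apply: pf.
    by apply: contra ab => /eqP /idx_inj ->.
  + move=> a b ab; have := hC (idx b) m (idx a) (Klt b).
    by rewrite norm_ltP addrAC.
- move=> d3 sigma [_ hmax].
  suff : kissing_config R d r by move/hmax; lia.
  have nz i : eucl_norm (V i) != 0 by case/andP: (hV i) => h _; rewrite gt_eqF.
  exists (fun i => (2 / eucl_norm (V i)) *: V i); split.
    move=> i; rewrite normZ ger0_norm ?divfK //.
    by apply: divr_ge0; [lra | apply: norm_ge0].
  move=> i j ij.
  have h := pf i j ij.
  have a0 : 0 < eucl_norm (V i) by case/andP: (hV i).
  have b0 : 0 < eucl_norm (V j) by case/andP: (hV j).
  set a := eucl_norm (V i) in h a0 nz *; set b := eucl_norm (V j) in h b0 nz *.
  have e : dot ((2 / a) *: V i - (2 / b) *: V j) ((2 / a) *: V i - (2 / b) *: V j)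
      = 8 - 8 * (dot (V i) (V j) / (a * b)).
    rewrite !dotBl !dotBr !dotZl !dotZr (dotC (V j) (V i)).
    rewrite -!norm_sq -/a -/b; field.
    by rewrite gt_eqF // gt_eqF.
  have q : dot (V i) (V j) / (a * b) < 1 / 2.
    by rewrite ltr_pdivrMr ?mulr_gt0 //; lra.
  have h2 : 2 ^+ 2 <= eucl_norm ((2 / a) *: V i - (2 / b) *: V j) ^+ 2.
    by rewrite norm_sq e; lra.
  by move: h2; rewrite ler_pXn2r // ?nnegrE ?norm_ge0.
Qed.
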